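(* If $f:\{0,1\}^n\to\{0,1\}^n$ is computable by polynomial-size circuits, length-preserving, and one-to-one on $\{0,1\}^n$ for infinitely many $n$, then $f$ does not have a super-core.
   Context: A predicate $b$ computable by polynomial-size circuits is a super-core of $f:\{0,1\}^n\to\{0,1\}^{m(n)}$ if there do not exist a nondeterministic polynomial-size circuit family $\mathcal{A}_1$ (accepting iff some witness gives output 1), a co-nondeterministic polynomial-size circuit family $\mathcal{A}_2$ (rejecting iff some witness gives output 0), a polynomial $p$ and infinitely many $n$ such that either $\Pr_{x\in\{0,1\}^n}[\mathcal{A}_1(f(x),1^n)=b(x)=0]+\tfrac12\Pr_{y\in\{0,1\}^{m(n)}}[\mathcal{A}_1(y,1^n)=1]\ge \tfrac12+\tfrac1{p(n)}$ or $\Pr_{x}[\mathcal{A}_2(f(x),1^n)=b(x)=1]+\tfrac12\Pr_{y}[\mathcal{A}_2(y,1^n)=0]\ge \tfrac12+\tfrac1{p(n)}$ (uniform distributions). *)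

(* Defs.v *)
From mathcomp Require Import all_boot all_order all_algebra.
Set Implicit Arguments. Unset Strict Implicit. Unset Printing Implicit Defensive.
Import Order.TTheory GRing.Theory Num.Theory.
Local Open Scope ring_scope.

(* Wires 0 .. k-1 carry the k input bits; gate number t (0-based) writes    *)
(* wire k+t and may read any earlier wire.  A reference to a wire that does *)
(* not exist (yet) reads [false].                                          *)
Inductive gate := GAnd of nat & nat | GOr of nat & nat | GNot of nat.

Record circuit := Circuit { gates : seq gate; outs : seq nat }.

Definition eval_gate (w : seq bool) (g : gate) : bool :=
  match g with
  | GAnd i j => nth false w i && nth false w j
  | GOr i j => nth false w i || nth false w j
  | GNot i => ~~ nth false w i
  end.

Definition wires (c : circuit) (x : seq bool) : seq bool :=
  foldl (fun w g => rcons w (eval_gate w g)) x (gates c).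

Definition ceval (c : circuit) (x : seq bool) : seq bool :=
  [seq nth false (wires c x) i | i <- outs c].

Definition cbit (c : circuit) (x : seq bool) : bool := nth false (ceval c x) 0.

Definition csize (c : circuit) : nat := (size (gates c) + size (outs c))%N.

Definition poly_bounded (s : nat -> nat) : Prop :=
  exists q : {poly int}, forall n : nat, (s n)%:Z <= q.[n%:Z].

Definition infinitely_often (P : nat -> Prop) : Prop :=
  forall N : nat, exists2 n : nat, (N <= n)%N & P n.

Definition poly_computable_fun (f : seq bool -> seq bool) : Prop :=
  exists C : nat -> circuit, poly_bounded (fun n => csize (C n)) /\
    forall (n : nat) (x : n.-tuple bool), ceval (C n) x = f x.

Definition poly_computable_pred (b : seq bool -> bool) : Prop :=
  exists C : nat -> circuit, poly_bounded (fun n => csize (C n)) /\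
    forall (n : nat) (x : n.-tuple bool), cbit (C n) x = b x.

(* The n-th circuit gets input (y, 1^n, w) with a witness w of length wit n *)
Record ndfamily := NDFamily { ndcirc : nat -> circuit; ndwit : nat -> nat }.

Definition nd_poly_size (A : ndfamily) : Prop :=
  poly_bounded (fun n => (csize (ndcirc A n) + ndwit A n)%N).

Definition nd_out (A : ndfamily) (n : nat) (y : seq bool) : bool :=
  [exists w : (ndwit A n).-tuple bool,
     cbit (ndcirc A n) (y ++ nseq n true ++ w)].

Definition cond_out (A : ndfamily) (n : nat) (y : seq bool) : bool :=
  [forall w : (ndwit A n).-tuple bool,
     cbit (ndcirc A n) (y ++ nseq n true ++ w)].

Definition Pr (k : nat) (P : pred (k.-tuple bool)) : rat :=
  (#|[pred x | P x]|)%:R / (2 ^ k)%:R.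

Definition super_core (f : seq bool -> seq bool) (m : nat -> nat)
    (b : seq bool -> bool) : Prop :=
  poly_computable_pred b /\
  ~ exists (A1 A2 : ndfamily) (p : {poly int}),
      [/\ nd_poly_size A1, nd_poly_size A2 &
      infinitely_often (fun n =>
        0 < p.[n%:Z] /\
        (Pr (fun x : n.-tuple bool => ~~ nd_out A1 n (f x) && ~~ b x)
           + 2^-1 * Pr (fun y : (m n).-tuple bool => nd_out A1 n y)
           >= 2^-1 + (p.[n%:Z])%:~R^-1
         \/
         Pr (fun x : n.-tuple bool => cond_out A2 n (f x) && b x)
           + 2^-1 * Pr (fun y : (m n).-tuple bool => ~~ cond_out A2 n y)
           >= 2^-1 + (p.[n%:Z])%:~R^-1))].

Definition has_super_core (f : seq bool -> seq bool) (m : nat -> nat) : Prop :=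
  exists b : seq bool -> bool, super_core f m b.

(* Main.v *)
Require Import Defs.
From mathcomp Require Import all_boot all_order all_algebra.
From mathcomp Require Import zify ring lra.
Set Implicit Arguments. Unset Strict Implicit. Unset Printing Implicit Defensive.

Definition step (w : seq bool) (g : gate) := rcons w (eval_gate w g).

Lemma size_foldl_step w gs : size (foldl step w gs) = size w + size gs.
Proof. elim: gs w => [|g gs IH] w /=; first by rewrite addn0.
by rewrite IH size_rcons addSnnS. Qed.

Lemma nth_foldl_step w gs i : i < size w -> nth false (foldl step w gs) i = nth false w i.
Proof. elim: gs w => [|g gs IH] w //= hi.
rewrite IH; first by rewrite /step nth_rcons hi.
by rewrite size_rcons (ltn_trans hi). Qed.

Definition shiftg k g := match g with GAnd i j => GAnd (k+i) (k+j)
  | GOr i j => GOr (k+i) (k+j) | GNot i => GNot (k+i) end.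

Lemma nthL (w s : seq bool) k : nth false (w ++ s) (size w + k) = nth false s k.
Proof. by rewrite nth_cat ltnNge leq_addr /= addKn. Qed.

Lemma shift_foldl pre x gs :
  foldl step (pre ++ x) (map (shiftg (size pre)) gs) = pre ++ foldl step x gs.
Proof.
elim: gs x => [|g gs IH] x //=.
have -> : step (pre ++ x) (shiftg (size pre) g) = pre ++ step x g.
  by rewrite /step rcons_cat; by case: g => * /=; rewrite ?nthL.
by rewrite IH.
Qed.

Definition copyg (ps : seq nat) := [seq GAnd p p | p <- ps].

Lemma copy_foldl w acc ps : all (fun p => p < size w) ps ->
  foldl step (w ++ acc) (copyg ps) = w ++ acc ++ [seq nth false w p | p <- ps].
Proof.
elim: ps acc => [|p ps IH] acc /=; first by rewrite cats0.
case/andP=> hp hps.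
rewrite /step /= andbb nth_cat hp rcons_cat -/step.
by rewrite IH // -cats1 -catA.
Qed.

Definition call L ps c := copyg ps ++ map (shiftg L) (gates c).

Lemma call_foldl w ps c : all (fun p => p < size w) ps ->
  foldl step w (call (size w) ps c) = w ++ wires c [seq nth false w p | p <- ps].
Proof.
move=> hps; rewrite /call foldl_cat.
have := copy_foldl [::] hps; rewrite cats0 /= => ->.
by rewrite shift_foldl.
Qed.

Definition normc n c := let N := (n + size (gates c))%N in
  Circuit (rcons (gates c) (GAnd N N)) [seq if o < N then o else N | o <- outs c].

Lemma wires_normc n c x : size x = n ->
  wires (normc n c) x = rcons (wires c x) false.
Proof.
move=> hx; rewrite /wires /= -cats1 foldl_cat /= /step /=.
rewrite -/(wires c x) !nth_default ?cats1 //.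
by rewrite /wires size_foldl_step hx.
Qed.

Lemma ceval_normc n c x : size x = n -> ceval (normc n c) x = ceval c x.
Proof.
move=> hx; rewrite /ceval wires_normc // -map_comp; apply: eq_map => o /=.
have hs : size (wires c x) = (n + size (gates c))%N by rewrite /wires size_foldl_step hx.
case: ifP => ho; first by rewrite nth_rcons hs ho.
by rewrite nth_rcons hs ltnn eqxx nth_default // hs leqNgt ho.
Qed.

Lemma outs_normc n c : all (fun o => o < n + size (gates (normc n c))) (outs (normc n c)).
Proof.
apply/allP=> o /mapP [o' _ ->]; rewrite /= size_rcons addnS ltnS.
by case: ifP => [/ltnW|]. 
Qed.

Fixpoint eqchain (L acc : nat) (prs : seq (nat*nat)) : seq gate :=
  match prs with
  | [::] => [::]
  | (a,b) :: r => [:: GAnd a b; GNot a; GNot b; GAnd (L+1) (L+2); GOr (L+0) (L+3);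
                    GAnd acc (L+4)] ++ eqchain (L+6) (L+5) r
  end.
Fixpoint finalpos (L acc : nat) (prs : seq (nat*nat)) : nat :=
  if prs is _ :: r then finalpos (L+6) (L+5) r else acc.

Lemma eqchain_cons L acc a b r : eqchain L acc ((a,b)::r) =
  [:: GAnd a b; GNot a; GNot b; GAnd (L+1) (L+2); GOr (L+0) (L+3);
                    GAnd acc (L+4)] ++ eqchain (L+6) (L+5) r.
Proof. by []. Qed.

Lemma stepE w s g : step (w ++ s) g = w ++ rcons s (eval_gate (w ++ s) g).
Proof. by rewrite /step rcons_cat. Qed.

Lemma nthW (w s : seq bool) i : i < size w -> nth false (w ++ s) i = nth false w i.
Proof. by move=> h; rewrite nth_cat h. Qed.

Lemma eqchain_spec prs w acc :
  acc < size w -> all (fun pr => (pr.1 < size w) && (pr.2 < size w)) prs ->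
  nth false (foldl step w (eqchain (size w) acc prs)) (finalpos (size w) acc prs)
  = nth false w acc && all (fun pr => nth false w pr.1 == nth false w pr.2) prs.
Proof.
elim: prs w acc => [|[a b] r IH] w acc hacc; first by rewrite /= andbT.
case/andP=> /andP [ha hb] hr.
rewrite eqchain_cons foldl_cat [finalpos _ _ _]/=.
set W1 := foldl step w _.
have -> : W1 = w ++ [:: nth false w a && nth false w b; ~~ nth false w a; ~~ nth false w b;
   ~~ nth false w a && ~~ nth false w b;
   (nth false w a && nth false w b) || (~~ nth false w a && ~~ nth false w b);
   nth false w acc && ((nth false w a && nth false w b) || (~~ nth false w a && ~~ nth false w b))].
  rewrite /W1 /= -{1}[w]cats0 !stepE /= !nthL.
  by rewrite !(nthW _ ha) !(nthW _ hb) !(nthW _ hacc).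
set W := w ++ _.
have hW : size W = size w + 6 by rewrite size_cat.
have hall : all (fun pr => (pr.1 < size W) && (pr.2 < size W)) r.
  apply: sub_all hr => -[x y] /andP [hx hy] /=.
  by rewrite hW (ltn_addr 6 hx) (ltn_addr 6 hy).
rewrite -hW IH; last 2 first.
- by rewrite hW ltn_add2l.
- exact: hall.
rewrite /W -{1}[size w + 5]/(size w + 5) nthL /=.
have -> : all (fun pr => nth false (w ++ [:: nth false w a && nth false w b; ~~ nth false w a; ~~ nth false w b;
   ~~ nth false w a && ~~ nth false w b;
   (nth false w a && nth false w b) || (~~ nth false w a && ~~ nth false w b);
   nth false w acc && ((nth false w a && nth false w b) || (~~ nth false w a && ~~ nth false w b))]) pr.1 ==
   nth false (w ++ [:: nth false w a && nth false w b; ~~ nth false w a; ~~ nth false w b;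
   ~~ nth false w a && ~~ nth false w b;
   (nth false w a && nth false w b) || (~~ nth false w a && ~~ nth false w b);
   nth false w acc && ((nth false w a && nth false w b) || (~~ nth false w a && ~~ nth false w b))]) pr.2) r
   = all (fun pr => nth false w pr.1 == nth false w pr.2) r.
  apply: eq_in_all => -[x y] /(allP hr) /andP [hx hy] /=.
  by rewrite !nthW.
by case: (nth false w a); case: (nth false w b); case: (nth false w acc).
Qed.

Lemma size_wires c x : size (wires c x) = size x + size (gates c).
Proof. exact: size_foldl_step. Qed.

Lemma eq_seq_all (s y : seq bool) n : size s = n -> size y = n ->
  (s == y) = all (fun i => nth false s i == nth false y i) (iota 0 n).
Proof.
move=> hs hy; apply/eqP/allP => [-> i _ //|H].
apply: (@eq_from_nth _ false); first by rewrite hs hy.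
by move=> i; rewrite hs => hi; apply/eqP/H; rewrite mem_iota.
Qed.

Lemma size_eqchain L acc prs : size (eqchain L acc prs) = (size prs * 6)%N.
Proof. by elim: prs L acc => [|[a b] r IH] L acc //; rewrite eqchain_cons size_cat IH mulSn. Qed.

Definition bigc (n : nat) (Cf Cb : circuit) (ng no : bool) : circuit :=
  let cf := normc n Cf in let cb := normc n Cb in
  let ps := [seq n + (n + i) | i <- iota 0 n] in
  let L0 := n + (n + n) in
  let L1 := L0 + (n + size (gates cf)) in
  let L2 := L1 + (n + size (gates cb)) in
  let ob := if outs cb is o :: _ then L1 + o else L2 in
  let prs := [seq (L0 + nth 0 (outs cf) i, i) | i <- iota 0 n] in
  let F := finalpos (L2+1) L2 prs in
  Circuit (call L0 ps cf ++ call L1 ps cb ++ [:: if ng then GNot ob else GAnd ob ob]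
           ++ eqchain (L2+1) L2 prs ++ (if no then [:: GNot F] else [::]))
          [:: if no then L2 + 1 + 6 * n else F].

Lemma bigc_spec n Cf Cb ng no y w : size y = n -> size w = n -> size (ceval Cf w) = n ->
  cbit (bigc n Cf Cb ng no) (y ++ nseq n true ++ w)
  = no (+) ((ceval Cf w == y) && (ng (+) cbit Cb w)).
Proof.
move=> hy hw hf.
set cf := normc n Cf; set cb := normc n Cb.
set ps := [seq n + (n + i) | i <- iota 0 n].
set L0 := n + (n + n).
set L1 := L0 + (n + size (gates cf)).
set L2 := L1 + (n + size (gates cb)).
set ob := if outs cb is o :: _ then L1 + o else L2.
set prs := [seq (L0 + nth 0 (outs cf) i, i) | i <- iota 0 n].
set F := finalpos (L2+1) L2 prs.
set inp := y ++ nseq n true ++ w.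
have hinp : size inp = L0 by rewrite /inp !size_cat size_nseq hy hw.
have hps : all (fun p => p < size inp) ps.
  by apply/allP => p /mapP [i]; rewrite mem_iota hinp /L0 => /andP [_ hi] ->; rewrite !ltn_add2l.
have hpsw : [seq nth false inp p | p <- ps] = w.
  rewrite /ps -map_comp -[RHS](mkseq_nth false w) hw /mkseq; apply: eq_map => i /=.
  by rewrite /inp nth_cat hy ltnNge leq_addr /= addKn nth_cat size_nseq ltnNge leq_addr /= addKn.
have E1 : foldl step inp (call L0 ps cf) = inp ++ wires cf w.
  by rewrite -hinp call_foldl // hpsw.
set W1 := inp ++ wires cf w.
have hW1 : size W1 = L1 by rewrite size_cat size_wires hinp hw.
have hps1 : all (fun p => p < size W1) ps.
  by apply: sub_all hps => p /= hp; rewrite size_cat ltn_addr.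
have hpsw1 : [seq nth false W1 p | p <- ps] = w.
  by rewrite -[RHS]hpsw; apply/eq_in_map => p /(allP hps) /= hp; rewrite /W1 nthW.
have E2 : foldl step W1 (call L1 ps cb) = W1 ++ wires cb w.
  by rewrite -hW1 call_foldl // hpsw1.
set W2 := W1 ++ wires cb w.
have hW2 : size W2 = L2 by rewrite size_cat size_wires hW1 hw.
have hob : nth false W2 ob = cbit Cb w.
  rewrite /cbit -(ceval_normc Cb hw) -/cb /ob /ceval.
  case: (outs cb) => [|o os] /=; first by rewrite nth_default // hW2.
  by rewrite /W2 -hW1 nthL.
have E3 : foldl step W2 [:: if ng then GNot ob else GAnd ob ob] =
   rcons W2 (if ng then ~~ nth false W2 ob else nth false W2 ob).
  by case: (ng) => //=; rewrite /step /= andbb.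
set W3 := rcons W2 (if ng then ~~ nth false W2 ob else nth false W2 ob).
have hW3 : size W3 = L2 + 1 by rewrite size_rcons hW2 addn1.
have hav : nth false W3 L2 = ng (+) cbit Cb w.
  rewrite /W3 nth_rcons hW2 ltnn eqxx hob. by destruct ng.
have hso : size (outs cf) = n.
  by rewrite -[RHS]hf -(ceval_normc Cf hw) /ceval size_map.
have hob1 : forall i, i < n -> L0 + nth 0 (outs cf) i < L1.
  move=> i hi; rewrite ltn_add2l.
  have := allP (outs_normc n Cf) (nth 0 (outs cf) i) (mem_nth 0 _); rewrite hso => H.
  exact: H.
have hL1 : L1 <= L2 by rewrite leq_addr.
have hprs : all (fun pr => (pr.1 < size W3) && (pr.2 < size W3)) prs.
  apply/allP => pr /mapP [i]; rewrite mem_iota /= => hi -> /=.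
  rewrite hW3 addn1 !ltnS (leq_trans (ltnW (hob1 _ hi))) //=.
  move: hi; rewrite /L2 /L1 /L0; lia.
have hL2 : L2 < size W3 by rewrite hW3 addn1.
have E4 := eqchain_spec hL2 hprs.
rewrite hav hW3 in E4.
have hall : all (fun pr => nth false W3 pr.1 == nth false W3 pr.2) prs = (ceval Cf w == y).
  have hsz : size (ceval cf w) = n by rewrite ceval_normc.
  rewrite -(ceval_normc Cf hw) (eq_seq_all hsz hy) all_map.
  apply: eq_in_all => i; rewrite mem_iota /= => hi.
  have hiy : i < size y by rewrite hy.
  have hb1 := hob1 _ hi.
  have h1 : i < L2 by move: hi; rewrite /L2 /L1 /L0; lia.
  have h2 : i < L1 by move: hi; rewrite /L1 /L0; lia.
  have h3 : L0 + nth 0 (outs cf) i < L2 := leq_trans hb1 hL1.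
  have h4 : L0 + nth 0 (outs cf) i < size W1 by rewrite hW1.
  have h5 : i < size W1 by rewrite hW1.
  have h6 : i < size inp by rewrite hinp /L0; lia.
  rewrite /W3 !nth_rcons hW2 h1 h3 /W2 (nthW _ h4) (nthW _ h5) /W1 (nthW _ h6).
  rewrite -{1}hinp nthL /inp (nthW _ hiy) /ceval (nth_map 0) ?hso //.
rewrite hall in E4.
have -> : cbit (bigc n Cf Cb ng no) inp = nth false (foldl step inp
   (call L0 ps cf ++ call L1 ps cb ++ [:: if ng then GNot ob else GAnd ob ob] ++
    eqchain (L2+1) L2 prs ++ (if no then [:: GNot F] else [::])))
   (if no then L2 + 1 + 6 * n else F) by [].
rewrite foldl_cat E1 -/W1 foldl_cat E2 -/W2 foldl_cat E3 -/W3 foldl_cat.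
case: (no) => /=; last by rewrite E4 andbC.
have hs : size (foldl step W3 (eqchain (L2 + 1) L2 prs)) = L2 + 1 + 6 * n.
  by rewrite size_foldl_step hW3 size_eqchain size_map size_iota mulnC.
by rewrite /step -/step nth_rcons hs ltnn eqxx /= E4 andbC.
Qed.
Import Order.TTheory GRing.Theory Num.Theory.

Section R.
Local Open Scope ring_scope.
Lemma rat_arith (kb kn N m : nat) : (0 < N)%N -> (kb + kn = N)%N ->
  (2^-1 + ((4%:P : {poly int}).[m%:Z])%:~R^-1 <= kn%:R / N%:R + 2^-1 * (kb%:R / N%:R) :> rat) \/
  (2^-1 + ((4%:P : {poly int}).[m%:Z])%:~R^-1 <= kb%:R / N%:R + 2^-1 * (kn%:R / N%:R) :> rat).
Proof.
move=> hN hk.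
have hu : kb%:R / N%:R + kn%:R / N%:R = 1 :> rat.
  by rewrite -mulrDl -natrD hk divff // pnatr_eq0 -lt0n.
have hb0 : 0 <= kb%:R / N%:R :> rat by rewrite divr_ge0.
have hn0 : 0 <= kn%:R / N%:R :> rat by rewrite divr_ge0.
rewrite hornerC.
have -> : ((4 : int)%:~R : rat) = 4 by [].
move: hu hb0 hn0; set u := kb%:R / N%:R; set v := kn%:R / N%:R => hu hb0 hn0.
case: (lerP u v) => h; [left|right]; lra.
Qed.
End R.

Lemma poly_bounded_le (s t : nat -> nat) : (forall n, s n <= t n) -> poly_bounded t -> poly_bounded s.
Proof.
move=> hst [q hq]; exists q => n; apply: le_trans (hq n); rewrite lez_nat; exact: hst.
Qed.

Lemma poly_bounded_sum (s t : nat -> nat) : poly_bounded s -> poly_bounded t ->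
  poly_bounded (fun n => s n + t n).
Proof.
move=> [q1 h1] [q2 h2]; exists (q1 + q2)%R => n; rewrite hornerD PoszD.
exact: lerD.
Qed.

Lemma poly_bounded_lin (a c : nat) : poly_bounded (fun n => a * n + c).
Proof.
exists (a%:Z *: 'X + c%:Z%:P)%R => n; rewrite hornerD hornerZ hornerX hornerC.
by rewrite PoszD PoszM.
Qed.

Lemma size_call L ps c : size (call L ps c) = size ps + size (gates c).
Proof. by rewrite /call size_cat !size_map. Qed.

Lemma bigc_size n Cf Cb ng no :
  csize (bigc n Cf Cb ng no) + n <= 9 * n + 5 + (csize Cf + csize Cb).
Proof.
rewrite /csize /bigc /= !size_cat /copyg !size_map size_iota /= size_cat size_eqchain.
rewrite size_map size_iota !size_rcons; case: no => /=; lia.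
Qed.

Theorem corollary6p8 (f : seq bool -> seq bool) :
  poly_computable_fun f ->
  (forall x : seq bool, size (f x) = size x) ->
  infinitely_often (fun n => forall x y : n.-tuple bool, f x = f y -> x = y) ->
  ~ has_super_core f (fun n => n).
Proof.
move=> [Cf [hqf hCf]] hsz hinj [b [[Cb [hqb hCb]] hno]]; apply: hno.
pose A1 := NDFamily (fun n => bigc n (Cf n) (Cb n) false false) id.
pose A2 := NDFamily (fun n => bigc n (Cf n) (Cb n) true true) id.
have hps : forall ng no, poly_bounded (fun n => csize (bigc n (Cf n) (Cb n) ng no) + n).
  move=> ng no; apply: (@poly_bounded_le _ (fun n => (9 * n + 5) + (csize (Cf n) + csize (Cb n)))).
    by move=> n; apply: bigc_size.
  by apply: poly_bounded_sum; [apply: poly_bounded_lin | apply: poly_bounded_sum].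
exists A1, A2, (4%:P)%R; split; [exact: hps | exact: hps |].
move=> N; case: (hinj N) => n hNn hinjn; exists n => //.
split; first by rewrite hornerC.
have hspec : forall ng no (y w : n.-tuple bool),
    cbit (bigc n (Cf n) (Cb n) ng no) (y ++ nseq n true ++ w)
    = no (+) ((f w == y) && (ng (+) b w)).
  move=> ng no y w; rewrite bigc_spec ?size_tuple //; last by rewrite (hCf n w) hsz size_tuple.
  by rewrite (hCf n w) (hCb n w).
pose ft (x : n.-tuple bool) : n.-tuple bool := insubd x (f x).
have hft : forall x, val (ft x) = f x.
  by move=> x; rewrite val_insubd hsz size_tuple eqxx.
have ftinj : injective ft.
  by move=> x y /(congr1 val); rewrite !hft => /hinjn.
have nd1 : forall y : n.-tuple bool, nd_out A1 n y = (y \in ft @: [set x : n.-tuple bool | b x]).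
  move=> y; rewrite /nd_out /=; apply/existsP/imsetP.
    move=> [w]; rewrite hspec /= => /andP [/eqP hw hb].
    by exists w; rewrite ?inE // ; apply: val_inj; rewrite hft.
  move=> [w]; rewrite inE => hb ->; exists w.
  by rewrite hspec /= hft eqxx hb.
have nd2 : forall y : n.-tuple bool, ~~ cond_out A2 n y = (y \in ft @: [set x : n.-tuple bool | ~~ b x]).
  move=> y; rewrite /cond_out /= negb_forall; apply/existsP/imsetP.
    move=> [w]; rewrite hspec /= negbK => /andP [/eqP hw hb].
    by exists w; rewrite ?inE // ; apply: val_inj; rewrite hft.
  move=> [w]; rewrite inE => hb ->; exists w.
  by rewrite hspec /= negbK hft eqxx hb.
have nd1f : forall x : n.-tuple bool, nd_out A1 n (f x) = b x.
  move=> x; rewrite -hft nd1 (mem_imset _ _ ftinj) inE //.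
have nd2f : forall x : n.-tuple bool, cond_out A2 n (f x) = b x.
  move=> x; apply: negb_inj; rewrite -hft nd2 (mem_imset _ _ ftinj) inE //.
set kb := #|[set x : n.-tuple bool | b x]|.
set kn := #|[set x : n.-tuple bool | ~~ b x]|.
have hk : kb + kn = 2 ^ n.
  rewrite /kb /kn.
  have -> : [set x : n.-tuple bool | ~~ b x] = ~: [set x : n.-tuple bool | b x].
    by apply/setP => x; rewrite !inE.
  by rewrite cardsC card_tuple card_bool.
have e1 : Pr (fun x : n.-tuple bool => ~~ nd_out A1 n (f x) && ~~ b x) = (kn%:R / (2^n)%:R)%R.
  by rewrite /Pr; congr (_%:R / _)%R; apply: eq_card => x; rewrite !inE nd1f andbb.
have e2 : Pr (fun y : n.-tuple bool => nd_out A1 n y) = (kb%:R / (2^n)%:R)%R.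
  rewrite /Pr /kb -(card_imset _ ftinj); congr (_%:R / _)%R.
  by apply: eq_card => y; rewrite [in LHS]inE nd1.
have e3 : Pr (fun x : n.-tuple bool => cond_out A2 n (f x) && b x) = (kb%:R / (2^n)%:R)%R.
  by rewrite /Pr; congr (_%:R / _)%R; apply: eq_card => x; rewrite !inE nd2f andbb.
have e4 : Pr (fun y : n.-tuple bool => ~~ cond_out A2 n y) = (kn%:R / (2^n)%:R)%R.
  rewrite /Pr /kn -(card_imset _ ftinj); congr (_%:R / _)%R.
  by apply: eq_card => y; rewrite [in LHS]inE nd2.
rewrite /= e1 e2 e3 e4.
by apply: rat_arith; rewrite ?expn_gt0.
Qed.
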